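(* Let $G(Y)$ be a complex of groups over a polygonal complex $Y$, let $\sigma$ be a vertex of $Y$ whose link in $Y$ contains no loops, and let $V = G_\sigma$, $a_j$, $c_k$, $E_j$, $F_k$, $b_{kj}$ and the graph $L$ be as described in the context. Suppose that $a_j$ and $a_{j'}$ belong to at least one common face of $Y$. Then in $L$: (1) For all $g, g' \in V$ there is at least one edge connecting $g\psi_{a_j}(E_j)$ to $g'\psi_{a_{j'}}(E_{j'})$ if and only if every $h \in V$ can be written as $h = \psi_{a_j}(e_j)\, x\, \psi_{a_{j'}}(e_{j'})$ for some $e_j \in E_j$, $e_{j'} \in E_{j'}$ and $x \in X_{j,j'} := \{ g_{a_j,b_{kj}} g_{a_{j'},b_{kj'}}^{-1} \mid a_j, a_{j'}, c_k \text{ belong to the same face of } Y\}$. (2) For all $g, g' \in V$ there is at most one edge connecting $g\psi_{a_j}(E_j)$ to $g'\psi_{a_{j'}}(E_{j'})$ if and only if, for every $k$ such that $a_j$, $a_{j'}$ and $c_k$ belong to the same face of $Y$, $$ g_{a_j,b_{kj}}^{-1}\psi_{a_j}(E_j) g_{a_j,b_{kj}} \cap g_{a_{j'},b_{kj'}}^{-1}\psi_{a_{j'}}(E_{j'}) g_{a_{j'},b_{kj'}} = \psi_{c_k}(F_k).$$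
   Context: Let $Y$ be a polygonal complex and $Y'$ its first barycentric subdivision. The vertices of $Y'$ are the barycenters of cells of $Y$. Each edge $a$ of $Y'$ joins the barycenters of cells $\tau \subsetneq \tau'$ and is oriented from $i(a) = \tau'$ to $t(a) = \tau$. Edges $a, b$ of $Y'$ are composable if $i(a) = t(b)$; then $ab$ denotes the edge of $Y'$ with $i(ab) = i(b)$ and $t(ab) = t(a)$. A complex of groups $G(Y) = (G_\tau, \psi_a, g_{a,b})$ over $Y$ consists of: - a group $G_\tau$ for each vertex $\tau$ of $Y'$; - a monomorphism $\psi_a : G_{i(a)} \to G_{t(a)}$ for each edge $a$ of $Y'$; - for each composable pair $(a,b)$, an element $g_{a,b} \in G_{t(a)}$ with $\mathrm{Ad}(g_{a,b}) \circ \psi_{ab} = \psi_a \circ \psi_b$, where $\mathrm{Ad}$ denotes conjugation. Fix a vertex $\sigma$ of $Y$ whose link in $Y$ has no loops, i.e. no face adjacent to $\sigma$ is glued to itself along an edge containing $\sigma$. Put $V = G_\sigma$. Let $\{a_j\}$ be the edges of $Y'$ with $t(a_j) = \sigma$ and $i(a_j)$ the midpoint of an edge of $Y$, and put $E_j = G_{i(a_j)}$. Let $\{c_k\}$ be the edges of $Y'$ with $t(c_k) = \sigma$ and $i(c_k)$ the barycenter of a face of $Y$, and put $F_k = G_{i(c_k)}$. Whenever $a_j$ and $c_k$ lie in the same face of $Y$, let $b_{kj}$ be the unique edge of $Y'$ with $i(b_{kj}) = i(c_k)$ and $t(b_{kj}) = i(a_j)$, so that $a_j b_{kj} = c_k$.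 The link $L$ of the local development of $\sigma$ is the graph whose vertex set is the disjoint union of the coset sets $V/\psi_{a_j}(E_j)$ and whose edge set is the disjoint union of the coset sets $V/\psi_{c_k}(F_k)$. The edges between $g\psi_{a_j}(E_j)$ and $g'\psi_{a_{j'}}(E_{j'})$ are the cosets of $\psi_{c_k}(F_k)$ contained in $(g\,\psi_{a_j}(E_j)\,g_{a_j,b_{kj}}) \cap (g'\,\psi_{a_{j'}}(E_{j'})\,g_{a_{j'},b_{kj'}})$, for each $k$ such that $a_j$, $a_{j'}$ and $c_k$ belong to the same face of $Y$.
   Formalization: In (2), at most one edge means, for each k separately, at most one coset of $\psi_{c_k}(F_k)$ connecting $g\psi_{a_j}(E_j)$ to $g'\psi_{a_{j'}}(E_{j'})$; also $a_j \neq a_{j'}$ is assumed. Apart from conventions, each condition added here is assumed in the paper as well or is needed for the statement above to hold. *)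

(* Defs.v *)
From HB Require Import structures.
From mathcomp Require Import all_boot.
From mathcomp Require Import monoid.


Local Open Scope group_scope.

Definition monomorphism {G H : groupType} (f : G -> H) : Prop :=
  (forall x y, f (x * y) = f x * f y) /\ injective f.

(* The part of a complex of groups G(Y) over a polygonal complex Y that lives
   at (the star of) a vertex sigma of Y, in the notation of the paper:
   - [cV]            V = G_sigma;
   - [cJ]            index set of the edges a_j of Y' with t(a_j) = sigma and
                     i(a_j) the midpoint of an edge of Y; [cE j] = E_j;
   - [cK]            index set of the edges c_k of Y' with t(c_k) = sigma and
                     i(c_k) the barycenter of a face of Y;  [cF k] = F_k;
   - [psiA j] = psi_{a_j} : E_j -> V,  [psiC k] = psi_{c_k} : F_k -> V;
   - [same_face k j] : a_j and c_k lie in the same face of Y, i.e. the edge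
                     b_{kj} of Y' (with a_j b_{kj} = c_k) exists;
   - [psiB k j] = psi_{b_{kj}} : F_k -> E_j   (meaningful when same_face k j);
   - [gab k j]  = g_{a_j, b_{kj}} in V       (meaningful when same_face k j);
   - [compat] :  Ad(g_{a_j,b_{kj}}) o psi_{c_k} = psi_{a_j} o psi_{b_{kj}};
   - [no_loops] : the link of sigma in Y has no loops: each corner c_k of a
     face at sigma is adjacent (inside its face) to exactly two edges
     a_j, a_j' of Y at sigma, and these are distinct. *)
Record vertex_data := VertexData {
  cJ : Type;
  cK : Type;
  cV : groupType;
  cE : cJ -> groupType;
  cF : cK -> groupType;
  psiA : forall j, cE j -> cV;
  psiC : forall k, cF k -> cV;
  same_face : cK -> cJ -> Prop;
  psiB : forall k j, cF k -> cE j;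
  gab : cK -> cJ -> cV;
  psiA_mono : forall j, monomorphism (psiA j);
  psiC_mono : forall k, monomorphism (psiC k);
  psiB_mono : forall k j, same_face k j -> monomorphism (psiB k j);
  compat : forall k j, same_face k j -> forall f : cF k,
      gab k j * psiC k f * (gab k j)^-1 = psiA j (psiB k j f);
  no_loops : forall k, exists j1 j2, j1 <> j2 /\ same_face k j1 /\
      same_face k j2 /\ forall j, same_face k j -> j = j1 \/ j = j2
}.

Section Link.
Variable D : vertex_data.

Definition imA (j : cJ D) : cV D -> Prop := fun v => exists e, v = psiA D j e.
Definition imC (k : cK D) : cV D -> Prop := fun v => exists f, v = psiC D k f.

Definition translate (g : cV D) (S : cV D -> Prop) (x : cV D) : cV D -> Prop :=
  fun v => exists s, S s /\ v = g * s * x.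

Definition conj_set (S : cV D -> Prop) (x : cV D) : cV D -> Prop :=
  translate x^-1 S x.

(* The link L of the local development at sigma.
   Vertices: pairs (j, g) standing for the coset g psi_{a_j}(E_j).
   Edges:    pairs (k, h) standing for the coset h psi_{c_k}(F_k).
   [link_edge k h j g j' g'] : the edge h psi_{c_k}(F_k) connects the vertex
   g psi_{a_j}(E_j) to g' psi_{a_j'}(E_j'), namely a_j, a_j', c_k belong to
   the same face and
     h psi_{c_k}(F_k) is contained in
     (g psi_{a_j}(E_j) g_{a_j,b_kj}) cap (g' psi_{a_j'}(E_j') g_{a_j',b_kj'}). *)
Definition link_edge (k : cK D) (h : cV D) (j : cJ D) (g : cV D)
    (j' : cJ D) (g' : cV D) : Prop :=
  same_face D k j /\ same_face D k j' /\
  forall c, imC k c ->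
    translate g (imA j) (gab D k j) (h * c) /\
    translate g' (imA j') (gab D k j') (h * c).

(* Two representatives h1, h2 give the same edge (k, h psi_{c_k}(F_k)) iff
   h1 psi_{c_k}(F_k) = h2 psi_{c_k}(F_k). *)
Definition same_edge (k : cK D) (h1 h2 : cV D) : Prop :=
  imC k (h1^-1 * h2).

Definition Xset (j j' : cJ D) : cV D -> Prop :=
  fun x => exists k, same_face D k j /\ same_face D k j' /\
                     x = gab D k j * (gab D k j')^-1.

End Link.

(* Main.v *)
Require Import Defs.
From mathcomp Require Import all_boot.
From mathcomp Require Import monoid.
Local Open Scope group_scope.

Section Helpers.

Lemma mono1 {G H : groupType} {f : G -> H} : monomorphism f -> f 1 = 1.
Proof.
move=> [Hm _]; have E := Hm 1 1; rewrite mulg1 in E.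
by apply: (@mulgI _ (f 1)); rewrite mulg1 -E.
Qed.

Lemma monoV {G H : groupType} {f : G -> H} : monomorphism f ->
  forall x, f x^-1 = (f x)^-1.
Proof.
move=> Hf x; symmetry; apply: mulg1_eq.
by rewrite -(proj1 Hf) mulgV (mono1 Hf).
Qed.

Variable D : vertex_data.

Lemma shiftA k j (sf : same_face D k j) g a f :
  g * psiA D j a * gab D k j * psiC D k f =
  g * psiA D j (a * psiB D k j f) * gab D k j.
Proof.
rewrite (proj1 (psiA_mono D j)) -(@compat D _ _ sf f).
by rewrite !mulgA mulgVK.
Qed.

Lemma leP k h j g j' g' :
  link_edge D k h j g j' g' <->
  [/\ same_face D k j, same_face D k j',
      exists a, h = g * psiA D j a * gab D k j &
      exists b, h = g' * psiA D j' b * gab D k j'].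
Proof.
split.
  move=> [sf [sf' H]].
  have [[s [[a ->] E1]] [s' [[b ->] E2]]] := H 1 (ex_intro _ 1 (esym (mono1 (psiC_mono D k)))).
  by split => //; [exists a | exists b]; rewrite -?E1 -?E2 mulg1.
move=> [sf sf' [a Ea] [b Eb]]; split => //; split => // c [f ->]; split.
  exists (psiA D j (a * psiB D k j f)); split; first by eexists.
  by rewrite Ea shiftA.
exists (psiA D j' (b * psiB D k j' f)); split; first by eexists.
by rewrite Eb shiftA.
Qed.

End Helpers.

Theorem proposition3p2 (D : vertex_data) (j j' : cJ D) :
  j <> j' ->
  (exists k, same_face D k j /\ same_face D k j') ->
  (* (1) *)
  ((forall g g' : cV D, exists k h, link_edge D k h j g j' g') <->
   (forall h : cV D, exists (ej : cE D j) (ej' : cE D j') x,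
      Xset D j j' x /\ h = psiA D j ej * x * psiA D j' ej'))
  /\
  (* (2) *)
  ((forall (g g' : cV D) (k : cK D) (h1 h2 : cV D),
       link_edge D k h1 j g j' g' -> link_edge D k h2 j g j' g' ->
       same_edge D k h1 h2) <->
   (forall k, same_face D k j -> same_face D k j' ->
      forall v, (conj_set D (imA D j) (gab D k j) v /\ conj_set D (imA D j') (gab D k j') v)
                <-> imC D k v)).
Proof.
move=> _ _.
have A1 := fun i => mono1 (psiA_mono D i).
have AV := fun i => monoV (psiA_mono D i).
have AM := fun i => proj1 (psiA_mono D i).
split; split.
- move=> H h; have [k [h0 /leP [sf sf' [a E1] [b E2]]]] := H 1 h.
  exists a, (b^-1), (gab D k j * (gab D k j')^-1); split.
    by exists k.
  have -> : h = h0 * (gab D k j')^-1 * (psiA D j' b)^-1 by rewrite E2 !mulgK.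
  by rewrite E1 mul1g AV !mulgA.
- move=> H g g'; have [a [b [x [[k [sf [sf' ->]]] E]]]] := H (g^-1 * g').
  exists k, (g * psiA D j a * gab D k j); apply/leP; split => //.
    by exists a.
  exists (b^-1).
  have -> : g' = g * (g^-1 * g') by rewrite mulVKg.
  by rewrite E AV !mulgA mulgK mulgVK.
- move=> H k sf sf' v; split.
    move=> [[s [[a ->] Ev1]] [s' [[b ->] Ev2]]].
    have := H 1 (gab D k j * (gab D k j')^-1) k (gab D k j) (gab D k j * v).
    rewrite /same_edge mulKg; apply.
      apply/leP; split => //; exists 1; first by rewrite A1 !mul1g.
      by rewrite A1 mulg1 mulgVK.
    apply/leP; split => //; [exists a | exists b].
      by rewrite Ev1 !mulgA mulgV mul1g.
    by rewrite Ev2 !mulgA.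
  move=> [f ->]; split.
    exists (psiA D j (psiB D k j f)); split; first by eexists.
    by rewrite -(@compat D _ _ sf f) !mulgA mulVg mul1g mulgVK.
  exists (psiA D j' (psiB D k j' f)); split; first by eexists.
  by rewrite -(@compat D _ _ sf' f) !mulgA mulVg mul1g mulgVK.
- move=> H g g' k h1 h2 /leP [sf sf' [a1 Ea1] [b1 Eb1]] /leP [_ _ [a2 Ea2] [b2 Eb2]].
  apply/(H k sf sf'); split.
    exists (psiA D j (a1^-1 * a2)); split; first by eexists.
    by rewrite Ea1 Ea2 AM AV !invgM !mulgA mulgVK.
  exists (psiA D j' (b1^-1 * b2)); split; first by eexists.
  by rewrite Eb1 Eb2 AM AV !invgM !mulgA mulgVK.
Qed.
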